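(* Let $p\ge 3$ and $q\in\{0,1,\dots,p-3\}$ be integers, let $x$ be a right vertex of $T_H$, let $f$ be any $2p$ distance coloring of $T_H$, and let $v\in\mathcal{F}^{nc}_{x,p-q}$ be a non corner vertex. Then $$\big|\{u\in\mathcal{F}_{x,p+q+1} : f(u)=f(v)\}\big|\le 1.$$
   Context: $T_H$ is the infinite hexagonal grid with vertex set $\mathbb{Z}^2$: $(i,j)$ is adjacent to $(i,j\pm1)$, and $(i,j)$ is adjacent to $(i+1,j)$ iff $i+j$ is even; no other edges. A vertex $(i,j)$ with $i+j$ even is called a right vertex. $d(u,v)$ is graph distance. A $2p$ distance coloring is a map $f:V(T_H)\to\{1,\dots,n\}$ with $f(u)\ne f(v)$ for all distinct $u,v$ with $d(u,v)\le 2p$. For a vertex $x$ and integer $k\ge0$, $\mathcal{F}_{x,k}=\{u: d(x,u)=k\}$. For a right vertex $x=(i,j)$ and $k\ge2$, the six corner vertices of $\mathcal{F}_{x,k}$ are $(i,j+k)$, $(i+\lceil k/2\rceil, j+\lfloor k/2\rfloor)$, $(i+\lceil k/2\rceil, j-\lfloor k/2\rfloor)$, $(i,j-k)$, $(i-\lfloor k/2\rfloor, j-\lceil k/2\rceil)$, $(i-\lfloor k/2\rfloor, j+\lceil k/2\rceil)$ (all lie in $\mathcal{F}_{x,k}$); their set is denoted $\mathcal{F}^c_{x,k}$, and $\mathcal{F}^{nc}_{x,k}=\mathcal{F}_{x,k}\setminus\mathcal{F}^c_{x,k}$ is the set of non corner vertices. *)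

(* Defs.v *)
From Stdlib Require Import ZArith Arith Lia.
Open Scope Z_scope.

Definition vertex := (Z * Z)%type.

Definition right_vertex (x : vertex) : Prop := Z.even (fst x + snd x) = true.

Definition adj (u v : vertex) : Prop :=
  (fst u = fst v /\ (snd v = snd u + 1 \/ snd v = snd u - 1)) \/
  (snd u = snd v /\
     ((fst v = fst u + 1 /\ Z.even (fst u + snd u) = true) \/
      (fst u = fst v + 1 /\ Z.even (fst v + snd v) = true))).

Inductive walk : nat -> vertex -> vertex -> Prop :=
| walk_nil : forall u, walk 0 u u
| walk_cons : forall n u w v, adj u w -> walk n w v -> walk (S n) u v.

Definition dist_eq (u v : vertex) (k : nat) : Prop :=
  walk k u v /\ forall m : nat, (m < k)%nat -> ~ walk m u v.

Definition dist_le (u v : vertex) (k : nat) : Prop :=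
  exists m : nat, (m <= k)%nat /\ walk m u v.

Definition distance_coloring (p n : nat) (f : vertex -> nat) : Prop :=
  (forall u, (1 <= f u)%nat /\ (f u <= n)%nat) /\
  (forall u v, u <> v -> dist_le u v (2 * p) -> f u <> f v).

Definition F (x : vertex) (k : nat) (u : vertex) : Prop := dist_eq x u k.

(* the six corner vertices of F_{x,k} (x right vertex, k >= 2) *)
Definition corner (x : vertex) (k : nat) (u : vertex) : Prop :=
  let i := fst x in let j := snd x in let K := Z.of_nat k in
  let c := (K + 1) / 2 in
  let fl := K / 2 in
  u = (i, j + K) \/ u = (i + c, j + fl) \/ u = (i + c, j - fl) \/
  u = (i, j - K) \/ u = (i - fl, j - c) \/ u = (i - fl, j + c).

Definition F_nc (x : vertex) (k : nat) (u : vertex) : Prop :=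
  F x k u /\ ~ corner x k u.

(* Main.v *)
Require Import Defs.
From Stdlib Require Import ZArith Arith Lia.
Open Scope Z_scope.

Definition E (s dj : Z) : Z :=
  let M := Z.max (Z.abs dj) (Z.max (s-1) (-s)) in
  Z.abs s + M + (M - dj) mod 2.

Definition Dist (a b : vertex) : Z :=
  let di := fst b - fst a in let dj := snd b - snd a in
  if (fst a + snd a) mod 2 =? 0 then E di dj else E (-di) dj.

Ltac zl := Z.to_euclidean_division_equations; lia.

Ltac par := repeat match goal with
  | H : context [Z.even ?n] |- _ => rewrite (Zeven_mod n) in H
  | |- context [Z.even ?n] => rewrite (Zeven_mod n)
  | H : context [?n =? ?m] |- _ => destruct (Z.eqb_spec n m)
  | |- context [?n =? ?m] => destruct (Z.eqb_spec n m)
  end.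

Lemma Dist_lip a w b : adj a w -> Dist a b <= 1 + Dist w b.
Proof.
  destruct a as [a1 a2], w as [w1 w2], b as [b1 b2].
  unfold adj, Dist, E; cbn [fst snd] in *; intros H;
  destruct H as [[-> [-> | ->]] | [-> [[-> ?] | [-> ?]]]]; par; try discriminate; zl.
Qed.

Lemma Dist_walk n a b : walk n a b -> Dist a b <= Z.of_nat n.
Proof.
  induction 1.
  - destruct u; unfold Dist, E; cbn [fst snd] in *; par; try discriminate; zl.
  - pose proof (Dist_lip _ _ v H). zl.
Qed.

Lemma Dist_nonneg a b : 0 <= Dist a b.
Proof. destruct a, b; unfold Dist, E; cbn [fst snd] in *; par; try discriminate; zl. Qed.

Lemma Dist_zero a b : Dist a b = 0 -> a = b.
Proof. destruct a as [a1 a2], b as [b1 b2]; unfold Dist, E; cbn [fst snd] in *; par; intros; f_equal; zl. Qed.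

Lemma Dist_step a b : 0 < Dist a b ->
  exists w, adj a w /\ Dist w b = Dist a b - 1.
Proof.
  destruct a as [a1 a2], b as [b1 b2]. intros H.
  destruct (Z.eqb_spec ((a1 + a2) mod 2) 0) as [He|Ho].
  - destruct (Z_le_gt_dec 1 (b1-a1)).
    + exists (a1+1, a2). split; [unfold adj; cbn [fst snd]; par; try discriminate; zl|].
      revert H; unfold Dist, E; cbn [fst snd]; par; try discriminate; zl.
    + destruct (Z_lt_le_dec (b2-a2) 0).
      * exists (a1, a2-1). split; [unfold adj; cbn [fst snd]; zl|].
        revert H; unfold Dist, E; cbn [fst snd]; par; try discriminate; zl.
      * exists (a1, a2+1). split; [unfold adj; cbn [fst snd]; zl|].
        revert H; unfold Dist, E; cbn [fst snd]; par; try discriminate; zl.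
  - destruct (Z_le_gt_dec 1 (a1-b1)).
    + exists (a1-1, a2). split; [unfold adj; cbn [fst snd]; par; try discriminate; zl|].
      revert H; unfold Dist, E; cbn [fst snd]; par; try discriminate; zl.
    + destruct (Z_lt_le_dec (b2-a2) 0).
      * exists (a1, a2-1). split; [unfold adj; cbn [fst snd]; zl|].
        revert H; unfold Dist, E; cbn [fst snd]; par; try discriminate; zl.
      * exists (a1, a2+1). split; [unfold adj; cbn [fst snd]; zl|].
        revert H; unfold Dist, E; cbn [fst snd]; par; try discriminate; zl.
Qed.

Lemma walk_Dist n : forall a b, Dist a b = Z.of_nat n -> walk n a b.
Proof.
  induction n; intros a b H.
  - cbn in H. apply Dist_zero in H. subst. constructor.
  - destruct (Dist_step a b) as [w [Hw Hd]]; [zl|].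
    econstructor; [exact Hw|]. apply IHn. zl.
Qed.

Lemma adj_sym a b : adj a b -> adj b a.
Proof. destruct a as [a1 a2], b as [b1 b2]; unfold adj; cbn [fst snd]; intros H.
  destruct H as [[-> [-> | ->]] | [-> [[-> ?] | [-> ?]]]].
  - left; split; [reflexivity|]; lia.
  - left; split; [reflexivity|]; lia.
  - right; split; [reflexivity|]. right; split; [reflexivity|assumption].
  - right; split; [reflexivity|]. left; split; [reflexivity|assumption].
Qed.

Lemma walk_snoc n a w b : walk n a w -> adj w b -> walk (S n) a b.
Proof.
  induction 1; intros.
  - econstructor; [exact H|constructor].
  - econstructor; [exact H|]. apply IHwalk; assumption.
Qed.

Lemma walk_rev n a b : walk n a b -> walk n b a.
Proof.
  induction 1. constructor. eapply walk_snoc; [exact IHwalk|]. apply adj_sym; assumption.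
Qed.

Lemma F_Dist x u k : F x k u -> Dist x u = Z.of_nat k.
Proof.
  intros [Hw Hm]. pose proof (Dist_walk _ _ _ Hw).
  destruct (Z.eq_dec (Dist x u) (Z.of_nat k)) as [e|ne]; [exact e|].
  exfalso. pose proof (Dist_nonneg x u).
  apply (Hm (Z.to_nat (Dist x u))); [lia|]. apply walk_Dist. lia.
Qed.

Lemma Dist_le_dist u v m : Dist v u <= Z.of_nat m -> dist_le u v m.
Proof.
  intros H. pose proof (Dist_nonneg v u).
  exists (Z.to_nat (Dist v u)). split; [lia|]. apply walk_rev, walk_Dist. lia.
Qed.

Open Scope Z_scope.

Definition sides (k c fl i j : Z) : Prop :=
  (i + j = k /\ 0 <= i <= c) \/
  (- i + j = k /\ 0 <= - i <= fl) \/
  (i - j = k /\ 0 <= i <= c) \/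
  (- i - j = k /\ 0 <= - i <= fl) \/
  (i = c /\ Z.abs j <= fl /\ (j - fl) mod 2 = 0) \/
  (i = - fl /\ Z.abs j <= c /\ (j - c) mod 2 = 0).

Lemma E1 i j : Z.max (i-1) (-i) <= Z.abs j -> E i j = Z.abs i + Z.abs j.
Proof. unfold E; intros. rewrite Z.max_l by lia. replace (Z.abs j - j) with (2 * (Z.max 0 (-j))) by lia.
  rewrite Z.mul_comm, Z_mod_mult. lia. Qed.
Lemma E2 i j : 1 <= i -> Z.abs j < i - 1 -> E i j = 2*i - 1 + (i - 1 - j) mod 2.
Proof. unfold E; intros. rewrite Z.max_r by lia. rewrite Z.max_l by lia. lia. Qed.
Lemma E3 i j : i <= -1 -> Z.abs j < - i -> E i j = - 2*i + (- i - j) mod 2.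
Proof. unfold E; intros. rewrite Z.max_r by lia. rewrite Z.max_r by lia. lia. Qed.

Lemma sphere k c fl i j : k = c + fl -> fl <= c <= fl + 1 -> 1 <= fl ->
  E i j = k -> sides k c fl i j.
Proof.
  intros. unfold sides.
  destruct (Z_le_gt_dec (Z.max (i-1) (-i)) (Z.abs j)).
  - rewrite E1 in H2 by assumption.
    destruct (Z_le_gt_dec 0 i); destruct (Z_le_gt_dec 0 j).
    + left; lia.
    + right; right; left; lia.
    + right; left; lia.
    + right; right; right; left; lia.
  - destruct (Z_le_gt_dec 1 i).
    + rewrite E2 in H2 by lia. right; right; right; right; left. zl.
    + rewrite E3 in H2 by lia. right; right; right; right; right. zl.
Qed.

Open Scope Z_scope.

Definition DD a b c d := if (a+b) mod 2 =? 0 then E (c-a) (d-b) else E (a-c) (d-b).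

Lemma A_TR k1 c1 fl1 k2 c2 fl2 a b c d :
  k1 = c1 + fl1 -> fl1 <= c1 <= fl1 + 1 -> 1 <= fl1 ->
  k2 = c2 + fl2 -> fl2 <= c2 <= fl2 + 1 -> 0 <= fl2 ->
  (a + b = k1 /\ 0 < a < c1) -> sides k2 c2 fl2 c d ->
  k1 + k2 <= DD a b c d -> (- c - d = k2 /\ 0 <= - c <= fl2).
Proof.
  intros. unfold DD, E, sides in *.
  destruct (Z.eqb_spec ((a+b) mod 2) 0);
  destruct H6 as [?|[?|[?|[?|[?|?]]]]]; zl.
Qed.

Lemma B_TR k2 c2 fl2 c d e g :
  k2 = c2 + fl2 -> fl2 <= c2 <= fl2 + 1 -> 0 <= fl2 ->
  (c + d = k2 /\ 0 <= c <= c2) -> (e + g = k2 /\ 0 <= e <= c2) -> DD c d e g <= k2 + 1.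
Proof.
  intros. unfold DD, E in *.
  destruct (Z.eqb_spec ((c+d) mod 2) 0); zl.
Qed.

Lemma A_TL k1 c1 fl1 k2 c2 fl2 a b c d :
  k1 = c1 + fl1 -> fl1 <= c1 <= fl1 + 1 -> 1 <= fl1 ->
  k2 = c2 + fl2 -> fl2 <= c2 <= fl2 + 1 -> 0 <= fl2 ->
  (- a + b = k1 /\ 0 < - a < fl1) -> sides k2 c2 fl2 c d ->
  k1 + k2 <= DD a b c d -> (c - d = k2 /\ 0 <= c <= c2).
Proof.
  intros. unfold DD, E, sides in *.
  destruct (Z.eqb_spec ((a+b) mod 2) 0);
  destruct H6 as [?|[?|[?|[?|[?|?]]]]]; zl.
Qed.

Lemma B_TL k2 c2 fl2 c d e g :
  k2 = c2 + fl2 -> fl2 <= c2 <= fl2 + 1 -> 0 <= fl2 ->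
  (- c + d = k2 /\ 0 <= - c <= fl2) -> (- e + g = k2 /\ 0 <= - e <= fl2) -> DD c d e g <= k2 + 1.
Proof.
  intros. unfold DD, E in *.
  destruct (Z.eqb_spec ((c+d) mod 2) 0); zl.
Qed.

Lemma A_BR k1 c1 fl1 k2 c2 fl2 a b c d :
  k1 = c1 + fl1 -> fl1 <= c1 <= fl1 + 1 -> 1 <= fl1 ->
  k2 = c2 + fl2 -> fl2 <= c2 <= fl2 + 1 -> 0 <= fl2 ->
  (a - b = k1 /\ 0 < a < c1) -> sides k2 c2 fl2 c d ->
  k1 + k2 <= DD a b c d -> (- c + d = k2 /\ 0 <= - c <= fl2).
Proof.
  intros. unfold DD, E, sides in *.
  destruct (Z.eqb_spec ((a+b) mod 2) 0);
  destruct H6 as [?|[?|[?|[?|[?|?]]]]]; zl.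
Qed.

Lemma B_BR k2 c2 fl2 c d e g :
  k2 = c2 + fl2 -> fl2 <= c2 <= fl2 + 1 -> 0 <= fl2 ->
  (c - d = k2 /\ 0 <= c <= c2) -> (e - g = k2 /\ 0 <= e <= c2) -> DD c d e g <= k2 + 1.
Proof.
  intros. unfold DD, E in *.
  destruct (Z.eqb_spec ((c+d) mod 2) 0); zl.
Qed.

Lemma A_BL k1 c1 fl1 k2 c2 fl2 a b c d :
  k1 = c1 + fl1 -> fl1 <= c1 <= fl1 + 1 -> 1 <= fl1 ->
  k2 = c2 + fl2 -> fl2 <= c2 <= fl2 + 1 -> 0 <= fl2 ->
  (- a - b = k1 /\ 0 < - a < fl1) -> sides k2 c2 fl2 c d ->
  k1 + k2 <= DD a b c d -> (c + d = k2 /\ 0 <= c <= c2).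
Proof.
  intros. unfold DD, E, sides in *.
  destruct (Z.eqb_spec ((a+b) mod 2) 0);
  destruct H6 as [?|[?|[?|[?|[?|?]]]]]; zl.
Qed.

Lemma B_BL k2 c2 fl2 c d e g :
  k2 = c2 + fl2 -> fl2 <= c2 <= fl2 + 1 -> 0 <= fl2 ->
  (- c - d = k2 /\ 0 <= - c <= fl2) -> (- e - g = k2 /\ 0 <= - e <= fl2) -> DD c d e g <= k2 + 1.
Proof.
  intros. unfold DD, E in *.
  destruct (Z.eqb_spec ((c+d) mod 2) 0); zl.
Qed.

Lemma A_R k1 c1 fl1 k2 c2 fl2 a b c d :
  k1 = c1 + fl1 -> fl1 <= c1 <= fl1 + 1 -> 1 <= fl1 ->
  k2 = c2 + fl2 -> fl2 <= c2 <= fl2 + 1 -> 0 <= fl2 ->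
  (a = c1 /\ Z.abs b < fl1 /\ (b - fl1) mod 2 = 0) -> sides k2 c2 fl2 c d ->
  k1 + k2 <= DD a b c d -> (c = - fl2 /\ Z.abs d <= c2 /\ (d - c2) mod 2 = 0).
Proof.
  intros. unfold DD, E, sides in *.
  destruct (Z.eqb_spec ((a+b) mod 2) 0);
  destruct H6 as [?|[?|[?|[?|[?|?]]]]]; zl.
Qed.

Lemma B_R k2 c2 fl2 c d e g :
  k2 = c2 + fl2 -> fl2 <= c2 <= fl2 + 1 -> 0 <= fl2 ->
  (c = c2 /\ Z.abs d <= fl2 /\ (d - fl2) mod 2 = 0) -> (e = c2 /\ Z.abs g <= fl2 /\ (g - fl2) mod 2 = 0) -> DD c d e g <= k2 + 1.
Proof.
  intros. unfold DD, E in *.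
  destruct (Z.eqb_spec ((c+d) mod 2) 0); zl.
Qed.

Lemma A_L k1 c1 fl1 k2 c2 fl2 a b c d :
  k1 = c1 + fl1 -> fl1 <= c1 <= fl1 + 1 -> 1 <= fl1 ->
  k2 = c2 + fl2 -> fl2 <= c2 <= fl2 + 1 -> 0 <= fl2 ->
  (a = - fl1 /\ Z.abs b < c1 /\ (b - c1) mod 2 = 0) -> sides k2 c2 fl2 c d ->
  k1 + k2 <= DD a b c d -> (c = c2 /\ Z.abs d <= fl2 /\ (d - fl2) mod 2 = 0).
Proof.
  intros. unfold DD, E, sides in *.
  destruct (Z.eqb_spec ((a+b) mod 2) 0);
  destruct H6 as [?|[?|[?|[?|[?|?]]]]]; zl.
Qed.

Lemma B_L k2 c2 fl2 c d e g :
  k2 = c2 + fl2 -> fl2 <= c2 <= fl2 + 1 -> 0 <= fl2 ->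
  (c = - fl2 /\ Z.abs d <= c2 /\ (d - c2) mod 2 = 0) -> (e = - fl2 /\ Z.abs g <= c2 /\ (g - c2) mod 2 = 0) -> DD c d e g <= k2 + 1.
Proof.
  intros. unfold DD, E in *.
  destruct (Z.eqb_spec ((c+d) mod 2) 0); zl.
Qed.


Open Scope Z_scope.

Lemma Dist_x x w : Z.even (fst x + snd x) = true ->
  Dist x w = E (fst w - fst x) (snd w - snd x).
Proof. intros H. unfold Dist. rewrite Zeven_mod in H. rewrite H. reflexivity. Qed.

Lemma Dist_rel x v u : Z.even (fst x + snd x) = true ->
  Dist v u = DD (fst v - fst x) (snd v - snd x) (fst u - fst x) (snd u - snd x).
Proof.
  intros H. rewrite Zeven_mod in H. apply Z.eqb_eq in H.
  unfold Dist, DD.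
  replace (fst u - fst x - (fst v - fst x)) with (fst u - fst v) by lia.
  replace (snd u - snd x - (snd v - snd x)) with (snd u - snd v) by lia.
  replace (fst v - fst x - (fst u - fst x)) with (- (fst u - fst v)) by lia.
  replace ((fst v - fst x + (snd v - snd x)) mod 2 =? 0) with ((fst v + snd v) mod 2 =? 0).
  reflexivity.
  destruct (Z.eqb_spec ((fst v + snd v) mod 2) 0); destruct (Z.eqb_spec ((fst v - fst x + (snd v - snd x)) mod 2) 0); zl.
Qed.

Lemma interior k c fl a b : k = c + fl -> fl <= c <= fl + 1 -> 1 <= fl ->
  sides k c fl a b ->
  ~ ((a = 0 /\ b = k) \/ (a = c /\ b = fl) \/ (a = c /\ b = - fl) \/
     (a = 0 /\ b = - k) \/ (a = - fl /\ b = - c) \/ (a = - fl /\ b = c)) ->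
  (a + b = k /\ 0 < a < c) \/ (- a + b = k /\ 0 < - a < fl) \/
  (a - b = k /\ 0 < a < c) \/ (- a - b = k /\ 0 < - a < fl) \/
  (a = c /\ Z.abs b < fl /\ (b - fl) mod 2 = 0) \/
  (a = - fl /\ Z.abs b < c /\ (b - c) mod 2 = 0).
Proof.
  intros H H0 H1 Hs Hn. unfold sides in Hs.
  destruct Hs as [?|[?|[?|[?|[?|?]]]]].
  - left. split; [lia|]. split.
    + apply Z.nle_gt; intro; apply Hn; left; lia.
    + apply Z.nle_gt; intro; apply Hn; right; left; lia.
  - right; left. split; [lia|]. split.
    + apply Z.nle_gt; intro; apply Hn; left; lia.
    + apply Z.nle_gt; intro; apply Hn; do 5 right; lia.
  - right; right; left. split; [lia|]. split.
    + apply Z.nle_gt; intro; apply Hn; do 3 right; left; lia.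
    + apply Z.nle_gt; intro; apply Hn; do 2 right; left; lia.
  - right; right; right; left. split; [lia|]. split.
    + apply Z.nle_gt; intro; apply Hn; do 3 right; left; lia.
    + apply Z.nle_gt; intro; apply Hn; do 4 right; left; lia.
  - right; right; right; right; left. split; [lia|]. split; [|tauto].
    apply Z.nle_gt; intro. destruct (Z_le_gt_dec 0 b).
    + apply Hn; right; left; lia.
    + apply Hn; do 2 right; left; lia.
  - right; right; right; right; right. split; [lia|]. split; [|tauto].
    apply Z.nle_gt; intro. destruct (Z_le_gt_dec 0 b).
    + apply Hn; do 5 right; lia.
    + apply Hn; do 4 right; left; lia.
Qed.

Open Scope Z_scope.

Lemma core k1 k2 a b c d e g : 3 <= k1 -> k1 < k2 ->
  E a b = k1 ->
  ~ ((a = 0 /\ b = k1) \/ (a = (k1+1)/2 /\ b = k1/2) \/ (a = (k1+1)/2 /\ b = - (k1/2)) \/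
     (a = 0 /\ b = - k1) \/ (a = - (k1/2) /\ b = - ((k1+1)/2)) \/ (a = - (k1/2) /\ b = (k1+1)/2)) ->
  E c d = k2 -> E e g = k2 ->
  k1 + k2 <= DD a b c d -> k1 + k2 <= DD a b e g -> DD c d e g <= k2 + 1.
Proof.
  intros Hk1 Hk12 Fv Hnc F1 F2 H1 H2.
  assert (Hc1 : k1 = (k1+1)/2 + k1/2 /\ k1/2 <= (k1+1)/2 <= k1/2 + 1 /\ 1 <= k1/2)
    by (clear - Hk1; zl).
  assert (Hc2 : k2 = (k2+1)/2 + k2/2 /\ k2/2 <= (k2+1)/2 <= k2/2 + 1 /\ 1 <= k2/2)
    by (clear - Hk1 Hk12; zl).
  set (c1 := (k1 + 1) / 2) in *. set (fl1 := k1 / 2) in *.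
  set (c2 := (k2 + 1) / 2) in *. set (fl2 := k2 / 2) in *.
  destruct Hc1 as [Hc1a [Hc1b Hc1c]], Hc2 as [Hc2a [Hc2b Hc2c]].
  clearbody c1 fl1 c2 fl2.
  assert (Sv := sphere _ _ _ _ _ Hc1a Hc1b Hc1c Fv).
  assert (S1 := sphere _ _ _ _ _ Hc2a Hc2b Hc2c F1).
  assert (S2 := sphere _ _ _ _ _ Hc2a Hc2b Hc2c F2).
  assert (Iv := interior _ _ _ _ _ Hc1a Hc1b Hc1c Sv Hnc).
  assert (Hf2 : 0 <= fl2) by (clear - Hc2c; lia).
  clear Fv F1 F2 Hnc Sv.
  destruct Iv as [I|[I|[I|[I|[I|I]]]]].
  - apply (B_BL k2 c2 fl2 _ _ _ _ Hc2a Hc2b Hf2); eapply (A_TR k1 c1 fl1 k2 c2 fl2 _ _ _ _ Hc1a Hc1b Hc1c Hc2a Hc2b Hf2 I); eassumption.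
  - apply (B_BR k2 c2 fl2 _ _ _ _ Hc2a Hc2b Hf2); eapply (A_TL k1 c1 fl1 k2 c2 fl2 _ _ _ _ Hc1a Hc1b Hc1c Hc2a Hc2b Hf2 I); eassumption.
  - apply (B_TL k2 c2 fl2 _ _ _ _ Hc2a Hc2b Hf2); eapply (A_BR k1 c1 fl1 k2 c2 fl2 _ _ _ _ Hc1a Hc1b Hc1c Hc2a Hc2b Hf2 I); eassumption.
  - apply (B_TR k2 c2 fl2 _ _ _ _ Hc2a Hc2b Hf2); eapply (A_BL k1 c1 fl1 k2 c2 fl2 _ _ _ _ Hc1a Hc1b Hc1c Hc2a Hc2b Hf2 I); eassumption.
  - apply (B_L k2 c2 fl2 _ _ _ _ Hc2a Hc2b Hf2); eapply (A_R k1 c1 fl1 k2 c2 fl2 _ _ _ _ Hc1a Hc1b Hc1c Hc2a Hc2b Hf2 I); eassumption.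
  - apply (B_R k2 c2 fl2 _ _ _ _ Hc2a Hc2b Hf2); eapply (A_L k1 c1 fl1 k2 c2 fl2 _ _ _ _ Hc1a Hc1b Hc1c Hc2a Hc2b Hf2 I); eassumption.
Qed.

Theorem mainTheorem7 (p q : nat) (x : vertex) (n : nat) (f : vertex -> nat) (v : vertex) :
  (3 <= p)%nat -> (q <= p - 3)%nat ->
  right_vertex x ->
  distance_coloring p n f ->
  F_nc x (p - q) v ->
  forall u1 u2 : vertex,
    F x (p + q + 1) u1 -> f u1 = f v ->
    F x (p + q + 1) u2 -> f u2 = f v ->
    u1 = u2.
Proof.
  intros Hp Hq Hx [_ Hcol] [Fv Hnc] u1 u2 F1 e1 F2 e2.
  unfold right_vertex in Hx.
  apply F_Dist in Fv, F1, F2.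
  rewrite Dist_x in Fv, F1, F2 by exact Hx.
  assert (Hk1 : 3 <= Z.of_nat (p - q)) by (clear - Hp Hq; lia).
  assert (Hk2 : Z.of_nat (p - q) + Z.of_nat (p + q + 1) = 2 * Z.of_nat p + 1)
    by (clear - Hp Hq; lia).
  assert (Hk12 : Z.of_nat (p - q) < Z.of_nat (p + q + 1)) by (clear - Hp Hq; lia).
  set (k1 := Z.of_nat (p - q)) in *.
  set (k2 := Z.of_nat (p + q + 1)) in *.
  assert (Hfar : forall u, Dist x u = k2 -> f u = f v -> k1 + k2 <= Dist v u).
  { intros u Hu Hf. apply Z.nlt_ge. intro Hlt.
    apply (Hcol u v).
    - intro E0; subst u. rewrite Dist_x in Hu by exact Hx. clear - Hu Fv Hk12. lia.
    - apply Dist_le_dist. rewrite Nat2Z.inj_mul. clear - Hlt Hk2. lia.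
    - exact Hf. }
  assert (H1 := Hfar u1). assert (H2 := Hfar u2).
  rewrite Dist_x in H1, H2 by exact Hx.
  specialize (H1 F1 e1). specialize (H2 F2 e2).
  rewrite (Dist_rel x) in H1, H2 by exact Hx.
  destruct x as [x1 x2], v as [v1 v2], u1 as [c d], u2 as [e g].
  cbn [fst snd] in *.
  assert (Hdd : DD (c - x1) (d - x2) (e - x1) (g - x2) <= k2 + 1).
  { apply (core k1 k2 (v1 - x1) (v2 - x2)); try assumption.
    intro Hc. apply Hnc. unfold corner. cbn [fst snd]. fold k1.
    destruct Hc as [[Ha Hb]|[[Ha Hb]|[[Ha Hb]|[[Ha Hb]|[[Ha Hb]|[Ha Hb]]]]]].
    - left. f_equal; lia.
    - right; left. f_equal; lia.
    - do 2 right; left. f_equal; lia.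
    - do 3 right; left. f_equal; lia.
    - do 4 right; left. f_equal; lia.
    - do 5 right. f_equal; lia. }
  destruct (Z.eq_dec c e) as [Ece|ne]; [destruct (Z.eq_dec d g) as [Edg|ne]; [subst; reflexivity|]|];
  exfalso; apply (Hcol (e, g) (c, d)); try (intro Heq; inversion Heq; lia);
  try congruence;
  apply Dist_le_dist; rewrite (Dist_rel (x1, x2)) by exact Hx; cbn [fst snd];
  rewrite Nat2Z.inj_mul; clear - Hdd Hk1 Hk2; lia.
Qed.
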